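(* Let $T=(V,E)$ be a finite undirected tree, let $\mathcal{O}$ be a nonempty proper subset of $V$, and consider the infection model described in the context with source $s\in V\setminus\mathcal{O}$. Then, with probability one, a class $r\in[\mathcal{O}]$ is feasible if and only if $\operatorname{argmin}_{o\in\mathcal{O}}\tau_o\in\partial r$. In particular, almost surely at least one feasible equivalence class exists, and the set of feasible classes forms a star arrangement.
   Context: Infection model: an infection starts at time $0$ at a single node $s$ (the source). For each edge $e\in E$ there is a nonnegative random delay $\tau_e$ with a continuous (atomless) distribution, and the $\tau_e$, $e\in E$, are independent. For $u,v\in V$, $[u,v]$ denotes the set of edges (or vertices, depending on context) of the unique path in $T$ between $u$ and $v$. The infection time of $v\in V$ is $\tau_v:=\sum_{e\in[s,v]}\tau_e$. The observers are the nodes of $\mathcal{O}$. Equivalence classes: for $u,v\in V\setminus\mathcal{O}$, $u\equiv v$ iff $[u,v]\cap\mathcal{O}=\emptyset$ (vertex sets). $[\mathcal{O}]$ is the set of equivalence classes. For $r\in[\mathcal{O}]$, its boundary $\partial r$ is the set of observers adjacent to some node of $r$. For $o\in\mathcal{O}$ and a class $r$, $V_{o;r}:=\{v\in V: [o,v]\cap r=\emptyset\}$, and $T_{o;r}$ is the subtree of $T$ induced on $V_{o;r}$, rooted at $o$. A class $r$ is feasible if for every $o\in\partial r$ and every $o_1,o_2\in V_{o;r}\cap\mathcal{O}$ with $o_1$ an ancestor of $o_2$ in $T_{o;r}$, one has $\tau_{o_1}\le\tau_{o_2}$. A set $R\subset[\mathcal{O}]$ of classes is a star arrangement if $\bigcap_{r\in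 R}\partial r\neq\emptyset$. *)

(* Defs.v *)
From HB Require Import structures.
From mathcomp Require Import all_boot all_order all_algebra.
From mathcomp Require Import all_classical all_reals all_analysis.
Set Implicit Arguments. Unset Strict Implicit. Unset Printing Implicit Defensive.
Import Order.TTheory GRing.Theory Num.Theory.
Local Open Scope classical_set_scope.
Local Open Scope ring_scope.

Section Graph.
Variable V : finType.
(* A simple undirected graph is given by its edge set E, each edge being a
   2-element set of vertices. *)
Variable E : {set {set V}}.

Definition adj (x y : V) : bool := ([set x; y]%SET \in E).

(* p is a simple path from u to v (listing the vertices after u), all of
   whose vertices lie in A. *)
Definition spath_in (A : set V) (u v : V) (p : seq V) : Prop :=
  [/\ path adj u p, last u p = v, uniq (u :: p) & forall w, w \in u :: p -> A w].

Definition spath := spath_in setT.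

Definition is_tree : Prop :=
  [/\ forall e, e \in E -> #|e| = 2,
      forall u v, exists p, spath u v p &
      forall u v p q, spath u v p -> spath u v q -> p = q].

Definition pathV (u v : V) : set V := [set w | exists p, spath u v p /\ w \in u :: p].

Definition pathE (u v : V) : set {set V} :=
  [set e | exists p, spath u v p /\ e \in [seq [set x.1; x.2]%SET | x <- zip (u :: p) p]].

Variable O : {set V}.

Definition equivO (u v : V) : Prop :=
  u \notin O /\ v \notin O /\ pathV u v `&` [set w | w \in O] = set0.

Definition is_class (r : set V) : Prop :=
  exists u, u \notin O /\ r = [set v | equivO u v].

Definition boundary (r : set V) : set V :=
  [set o | o \in O /\ exists v, r v /\ adj o v].

Definition Vor (o : V) (r : set V) : set V := [set v | pathV o v `&` r = set0].

Definition ancestor (o : V) (r : set V) (o1 o2 : V) : Prop :=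
  exists p, spath_in (Vor o r) o o2 p /\ o1 \in o :: p.

Variable R : realType.
Variable s : V.

Definition inf_time (t : {set V} -> R) (v : V) : R :=
  \sum_(e in E | `[< pathE s v e >]) t e.

Definition feasible (t : {set V} -> R) (r : set V) : Prop :=
  forall o, boundary r o ->
  forall o1 o2, Vor o r o1 -> o1 \in O -> Vor o r o2 -> o2 \in O ->
    ancestor o r o1 o2 -> inf_time t o1 <= inf_time t o2.

Definition star_arrangement (Rf : set V -> Prop) : Prop :=
  exists o, forall r, Rf r -> boundary r o.

Definition is_argmin (t : {set V} -> R) (o : V) : Prop :=
  o \in O /\ forall o', o' \in O -> o' != o -> inf_time t o < inf_time t o'.

End Graph.

Definition mutually_independent d (T : measurableType d) (R : realType)
    (P : probability T R) (I : finType) (E : {set I}) (X : I -> {RV P >-> R}) : Prop :=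
  forall (J : {set I}) (B : I -> set R), J \subset E ->
    (forall i, measurable (B i)) ->
    P (\bigcap_(i in [set i | i \in J]) (X i @^-1` B i)) =
      (\prod_(i in J) P (X i @^-1` B i))%E.

(* Main.v *)
Require Import Defs.
From HB Require Import structures.
From mathcomp Require Import all_boot all_order all_algebra.
From mathcomp Require Import all_classical all_reals all_analysis.
From mathcomp Require Import lra zify.
Import Order.TTheory GRing.Theory Num.Theory.
Local Open Scope classical_set_scope.
Local Open Scope ring_scope.
Set Implicit Arguments. Unset Strict Implicit. Unset Printing Implicit Defensive.
Set Implicit Arguments. Unset Strict Implicit. Unset Printing Implicit Defensive.

Section Tree.
Variable V : finType.
Variable E : {set {set V}}.
Hypothesis HT : is_tree E.

Local Notation adj := (adj E).

Lemma adj_sym x y : adj x y = adj y x.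
Proof. by rewrite /adj finset.setUC. Qed.

Lemma adj_neq x y : adj x y -> x != y.
Proof.
case: HT => H2 _ _ /H2 h; apply/eqP => exy; move: h.
by rewrite exy finset.setUid cards1.
Qed.

Lemma conn u v : exists p, spath E u v p. Proof. by case: HT. Qed.
Definition pt u v := sval (cid (conn u v)).
Lemma pt_spath u v : spath E u v (pt u v). Proof. exact: (svalP (cid (conn u v))). Qed.
Lemma pt_unique u v p : spath E u v p -> p = pt u v.
Proof. by case: HT => _ _ U h; exact: U h (pt_spath u v). Qed.
Lemma pt_path u v : path adj u (pt u v). Proof. by case: (pt_spath u v). Qed.
Lemma pt_last u v : last u (pt u v) = v. Proof. by case: (pt_spath u v). Qed.
Lemma pt_uniq u v : uniq (u :: pt u v). Proof. by case: (pt_spath u v). Qed.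
Lemma ptE u v p : path adj u p -> last u p = v -> uniq (u :: p) -> pt u v = p.
Proof. by move=> h1 h2 h3; symmetry; apply: pt_unique; split. Qed.

Lemma pv_head u v : u \in u :: pt u v. Proof. by rewrite inE eqxx. Qed.
Lemma pv_last u v : v \in u :: pt u v.
Proof. by rewrite -[X in X \in _](pt_last u v) mem_last. Qed.

Lemma spath_inW (A : set V) u v p : spath_in E A u v p -> p = pt u v.
Proof. by case=> h1 h2 h3 _; apply/esym/ptE. Qed.

Lemma pathVP u v w : pathV E u v w <-> w \in u :: pt u v.
Proof.
split => [[p [/pt_unique -> //]]| h]; exists (pt u v); split => //; exact: pt_spath.
Qed.

Lemma pt_refl u : pt u u = [::].
Proof. exact: ptE. Qed.

Lemma pt_adj x y : adj x y -> pt x y = [:: y].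
Proof.
move=> h; apply: ptE => /=; first by rewrite h.
 by [].
by rewrite inE andbT (adj_neq h).
Qed.

Lemma pt_cat u v w : w \in u :: pt u v -> pt u v = pt u w ++ pt w v.
Proof.
move=> H; have := pt_path u v; have := pt_last u v; have := pt_uniq u v.
case/splitPl: H => p1 p2 Hl Hu Hlast Hp.
rewrite cat_path Hl in Hp; case/andP: Hp => Hp1 Hp2.
rewrite last_cat Hl in Hlast.
rewrite -cat_cons cat_uniq in Hu; case/and3P: Hu => Hu1 Hd Hu2.
rewrite (ptE Hp1 Hl Hu1) (ptE Hp2 Hlast) //.
rewrite /= Hu2 andbT; apply/negP => wp2; move/hasPn: Hd => /(_ w wp2).
by rewrite -Hl mem_last.
Qed.

Lemma pt_rev u v : v :: pt v u = rev (u :: pt u v).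
Proof.
set p := pt u v.
have Hr : rev (u :: p) = v :: rev (belast u p).
  by rewrite [u :: p]lastI rev_rcons pt_last.
rewrite Hr; congr (_ :: _); apply: ptE.
- rewrite -(pt_last u v) rev_path -/p.
  rewrite (@eq_path _ _ adj) ?pt_path // => a b; exact: adj_sym.
- have h : last v (v :: rev (belast u p)) = last v (rev (u :: p)) by rewrite Hr.
  by rewrite /= in h; rewrite h rev_cons last_rcons.
- by rewrite -Hr rev_uniq pt_uniq.
Qed.

Lemma pv_rev u v w : (w \in v :: pt v u) = (w \in u :: pt u v).
Proof. by rewrite pt_rev mem_rev. Qed.

Lemma pt_tri a b c w : w \in a :: pt a b -> (w \in a :: pt a c) || (w \in c :: pt c b).
Proof.
set p := pt a c ++ pt c b.
have Hp : path adj a p by rewrite cat_path pt_path pt_last pt_path.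
have Hl : last a p = b by rewrite last_cat pt_last pt_last.
have [p' [Hp' Hu' Hs Hl']] : exists p', [/\ path adj a p', uniq (a :: p'),
    {subset p' <= p} & last a p' = last a p].
  by case: (shortenP Hp) => p' *; exists p'.
rewrite Hl in Hl'; rewrite (ptE Hp' Hl' Hu') inE => /orP [/eqP ->|/Hs].
  by rewrite inE eqxx.
rewrite mem_cat => /orP [h|h]; first by rewrite inE h orbT.
by rewrite [X in _ || X]inE h !orbT.
Qed.

Lemma pt_join a m b : (forall w, w \in a :: pt a m -> w \in m :: pt m b -> w = m) ->
  pt a b = pt a m ++ pt m b.
Proof.
move=> H; apply: ptE.
- by rewrite cat_path pt_path pt_last pt_path.
- by rewrite last_cat pt_last pt_last.
- rewrite -cat_cons cat_uniq pt_uniq /=.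
  have := pt_uniq m b; rewrite /= => /andP [mnot ub]; rewrite ub andbT.
  apply/hasPn => x xin; apply/negP => xa.
  have xm := H x xa (mem_behead (s := m :: pt m b) xin).
  by move: xin; rewrite xm (negbTE mnot).
Qed.

Lemma pt_cat3 u w z v : w \in u :: pt u v -> z \in w :: pt w v ->
  pt u z = pt u w ++ pt w z.
Proof.
move=> h1 h2; apply: ptE.
- by rewrite cat_path pt_path pt_last pt_path.
- by rewrite last_cat pt_last pt_last.
- have := pt_uniq u v; rewrite (pt_cat h1) (pt_cat h2) catA -cat_cons cat_uniq.
  by case/andP.
Qed.

Lemma pred_ex u v : u != v -> exists y,
  [/\ adj y v, pt u v = rcons (pt u y) v & v \notin u :: pt u y].
Proof.
move=> uv; have := pt_path u v; have := pt_last u v; have := pt_uniq u v.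
case/lastP: (pt u v) => [|q z]; first by move=> _ /= h; rewrite h eqxx in uv.
rewrite last_rcons => Hu Hz Hp; subst z; exists (last u q).
rewrite rcons_path in Hp; case/andP: Hp => Hp Ha.
rewrite -rcons_cons rcons_uniq in Hu; case/andP: Hu => Hn Hu.
by rewrite (ptE Hp erefl Hu); split.
Qed.

Definition edg (x : V) (p : seq V) := [seq [set z.1; z.2]%SET | z <- zip (x :: p) p].

Lemma edg_cons x y p : edg x (y :: p) = [set x; y]%SET :: edg y p.
Proof. by []. Qed.

Lemma edg_cat x p1 p2 : edg x (p1 ++ p2) = edg x p1 ++ edg (last x p1) p2.
Proof. by elim: p1 x => [|y p1 IH] x //; rewrite cat_cons !edg_cons IH. Qed.

Lemma edg_sub x p e : e \in edg x p -> forall z, z \in e -> z \in x :: p.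
Proof.
elim: p x => [|y p IH] x //; rewrite edg_cons inE => /orP [/eqP -> z|/IH h z /h hz].
  by rewrite !inE => /orP [->|->]; rewrite ?orbT.
by rewrite inE hz orbT.
Qed.

Lemma edg_E x p e : path adj x p -> e \in edg x p -> e \in E.
Proof.
elim: p x => [|y p IH] x //= /andP [h1 h2]; rewrite edg_cons inE => /orP [/eqP ->|]//.
exact: IH.
Qed.

Lemma pathEP u v e : pathE E u v e <-> e \in edg u (pt u v).
Proof.
split => [[p [/pt_unique -> //]]| h]; exists (pt u v); split => //; exact: pt_spath.
Qed.

Lemma edg_mono u v w e : w \in u :: pt u v -> e \in edg u (pt u w) -> e \in edg u (pt u v).
Proof. by move=> h1 h2; rewrite (pt_cat h1) edg_cat mem_cat h2. Qed.

Lemma pv_sub u v w z : w \in u :: pt u v -> z \in u :: pt u w -> z \in u :: pt u v.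
Proof. by move=> h1; rewrite (pt_cat h1) -cat_cons mem_cat => ->. Qed.

Lemma pv_sub2 u v w z : w \in u :: pt u v -> z \in w :: pt w v -> z \in u :: pt u v.
Proof.
move=> h1 hz; rewrite (pt_cat h1) -cat_cons mem_cat; move: hz.
by rewrite inE => /orP [/eqP ->|->]; rewrite ?pv_last ?orbT.
Qed.


Lemma sep_edge s a b : b \notin s :: pt s a ->
  exists e, [/\ e \in E, e \in edg s (pt s b) & e \notin edg s (pt s a)].
Proof.
move=> hb; have sb : s != b by apply: contraNneq hb => <-; exact: pv_head.
case: (pred_ex sb) => y [ayb hpt _].
exists [set y; b]%SET; split => //.
  by rewrite hpt -cats1 edg_cat pt_last mem_cat edg_cons inE eqxx orbT.
apply/negP => /edg_sub /(_ b); rewrite !inE eqxx orbT => /(_ isT).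
by apply/negP.
Qed.

Lemma sep_pair s a b : a != b -> b \notin s :: pt s a \/ a \notin s :: pt s b.
Proof.
move=> ab; apply/orP; rewrite -negb_and; apply/negP => /andP [h1 h2].
have e1 := pt_cat h1; have e2 := pt_cat h2.
have : size (pt a b) = 0%N.
  have := congr1 size e2; rewrite size_cat e1 size_cat; lia.
move/size0nil => e; have := pt_last a b; rewrite e /= => h; by rewrite h eqxx in ab.
Qed.

Lemma itE' (R : realType) s (t : {set V} -> R) v :
  inf_time E s t v = \sum_(f in E) (f \in edg s (pt s v))%:R * t f.
Proof.
rewrite /inf_time big_mkcondr; apply: eq_bigr => f _.
case: (boolP (f \in edg s (pt s v))) => h.
  by rewrite asboolT ?mul1r //; exact/pathEP.
by rewrite asboolF ?mul0r // => /pathEP; apply/negP.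
Qed.

Section Det.
Variable O : {set V}.
Local Notation cl u := [set v | equivO E O u v].

Lemma equivOP u v : equivO E O u v <-> (forall w, w \in u :: pt u v -> w \notin O).
Proof.
split => [[_ [_ H]] w wp|H]; last first.
  split; first exact: H (pv_head u v).
  split; first exact: H (pv_last u v).
  apply/seteqP; split => // w [/pathVP h /= wO]; by move: (H w h); rewrite wO.
apply/negP => wO.
have : (pathV E u v `&` [set w | w \in O]) w by split => //; exact/pathVP.
by rewrite H.
Qed.

Lemma cls_nO u v : equivO E O u v -> v \notin O.
Proof. by case=> _ []. Qed.

Lemma eqv_sym u v : equivO E O u v -> equivO E O v u.
Proof. by move/equivOP => H; apply/equivOP => w; rewrite pv_rev; exact: H. Qed.

Lemma eqv_trans u v z : equivO E O u v -> equivO E O v z -> equivO E O u z.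
Proof.
move/equivOP => H1 /equivOP H2; apply/equivOP => w /(pt_tri v) /orP [].
  exact: H1. exact: H2.
Qed.

Lemma eqv_sub u v w : equivO E O u v -> w \in u :: pt u v -> equivO E O u w.
Proof. by move/equivOP => H hw; apply/equivOP => z hz; apply: H; exact: pv_sub hw hz. Qed.

Lemma conv u x y w : equivO E O u x -> equivO E O u y -> w \in x :: pt x y ->
  equivO E O u w.
Proof.
move=> hx hy hw; apply: (eqv_trans hx); apply: (eqv_sub _ hw).
exact: eqv_trans (eqv_sym hx) hy.
Qed.

Section Main.
Variable s : V.
Variable R : realType.
Variable t : {set V} -> R.
Hypothesis sO : s \notin O.
Hypothesis tpos : forall e, e \in E -> 0 <= t e.
Hypothesis tinj : forall o1 o2, o1 \in O -> o2 \in O ->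
  inf_time E s t o1 = inf_time E s t o2 -> o1 = o2.
Local Notation it := (inf_time E s t).

Lemma itE v : it v = \sum_(e in E | e \in edg s (pt s v)) t e.
Proof.
apply: eq_bigl => e; case: (e \in E) => //=; apply/asboolP/idP => h; exact/pathEP.
Qed.

Lemma it_mono w v : w \in s :: pt s v -> it w <= it v.
Proof.
move=> h; rewrite !itE !big_mkcondr /=; apply: ler_sum => e eE.
case: ifP => h1; case: ifP => h2; rewrite ?lexx //.
  by rewrite (edg_mono h h1) in h2.
exact: tpos.
Qed.

Lemma argmin_ex : O != finset.set0 ->
  exists2 m, m \in O & forall o, o \in O -> it m <= it o.
Proof.
case/set0Pn => o0 o0O.
by case: (arg_minP it o0O) => m mO H; exists m => // o oO; exact: H.
Qed.

Section Mm.
Variable m : V.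
Hypothesis mO : m \in O.
Hypothesis mmin : forall o, o \in O -> it m <= it o.

Lemma FactA w : w \in s :: pt s m -> w \in O -> w = m.
Proof. by move=> h wO; apply: tinj => //; apply/eqP; rewrite eq_le (it_mono h) mmin. Qed.

Lemma it_lt o : o \in O -> o != m -> it m < it o.
Proof.
move=> oO om; rewrite lt_neqAle mmin // andbT; apply/eqP => h.
by move/eqP: om; apply; apply/esym/tinj.
Qed.

Lemma argminP : is_argmin E O s t m.
Proof. by split => // o oO om; exact: it_lt. Qed.

Lemma feas_of_bd u : boundary E O (cl u) m -> feasible E O s t (cl u).
Proof.
case=> _ [x [rx amx]].
move=> o [oO [y [ry aoy]]] o1 o2 V1 o1O V2 o2O [p [/spath_inW Hp o1p]].
have V1' : pathV E o o1 `&` cl u = set0 := V1.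
have V2' : pathV E o o2 `&` cl u = set0 := V2.
have rx' : equivO E O u x := rx.
have ry' : equivO E O u y := ry.
rewrite {}Hp in o1p.
have [h1s|h1s2] := orP (pt_tri s o1p); last exact: it_mono.
rewrite pv_rev in h1s.
have [omeq|om] := eqVneq o m.
  by rewrite omeq in h1s; rewrite (FactA h1s o1O); exact: mmin.
have K : o \notin s :: pt s y.
  apply/negP => h; case/orP: (pt_tri m h) => [|h2].
    by move/FactA => /(_ oO) /eqP; rewrite (negbTE om).
  case/orP: (pt_tri x h2) => [|h3].
    rewrite pt_adj // !inE => /orP [/eqP oe|/eqP ox]; first by rewrite oe eqxx in om.
    by move: rx'; rewrite -ox => /cls_nO; rewrite oO.
  by have := conv rx' ry' h3 => /cls_nO; rewrite oO.
have ptos : pt o s = y :: pt y s.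
  have -> : pt o s = pt o y ++ pt y s.
    apply: pt_join => w; rewrite pt_adj // mem_seq2 => /orP [/eqP ->|/eqP -> //].
    by rewrite pv_rev (negbTE K).
  by rewrite pt_adj.
have yin z : z \in o :: pt o s -> z != o -> y \in o :: pt o z.
  move=> hz zo; have hy : y \in o :: pt o s by rewrite ptos !inE eqxx orbT.
  have hz' : z \in y :: pt y s by move: hz; rewrite ptos inE (negbTE zo).
  by rewrite (pt_cat3 hy hz') -cat_cons mem_cat pv_last.
have o1o : o1 = o.
  apply/eqP; apply/negPn/negP => o1o.
  have h1' : o1 \in o :: pt o s by rewrite pv_rev.
  have hy := yin o1 h1' o1o.
  have : (pathV E o o1 `&` cl u) y by split => //; exact/pathVP.
  by rewrite V1'.
have : pt s o2 = pt s o ++ pt o o2.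
  apply: pt_join => w ws wo2; apply/eqP; apply/negPn/negP => wo.
  have ws' : w \in o :: pt o s by rewrite pv_rev.
  have hy := yin w ws' wo.
  have : (pathV E o o2 `&` cl u) y by split => //; apply/pathVP; exact: pv_sub wo2 hy.
  by rewrite V2'.
move=> h; subst o1; apply: it_mono; by rewrite h -cat_cons mem_cat pv_last.
Qed.

Lemma bd_of_feas u : u \notin O -> feasible E O s t (cl u) -> boundary E O (cl u) m.
Proof.
move=> uO Hf; apply: contrapT => nb.
have : exists o, [/\ o \in u :: pt u m, o \in O &
    forall w, w \in u :: pt u o -> w \in O -> w = o].
  have Pm : (m \in u :: pt u m) && (m \in O) by rewrite pv_last mO.
  case: (@arg_minnP _ m (fun z => (z \in u :: pt u m) && (z \in O)) (fun z => size (pt u z)) Pm) => o /andP [oL oO] H.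
  exists o; split => // w wo wO.
  have wL : w \in u :: pt u m := pv_sub oL wo.
  have := H w; rewrite wL wO => /(_ isT).
  rewrite (pt_cat wo) size_cat -[X in (_ <= X)%N]addn0 leq_add2l leqn0 => /nilP e.
  by have := pt_last w o; rewrite e.
case=> o [oL oO omin].
have uo : u != o by apply: contraNneq uO => ->.
case: (pred_ex uo) => y [ayo hpt ny].
have ry : equivO E O u y.
  apply/equivOP => w wy; apply/negP => wO.
  have wo : w \in u :: pt u o by rewrite hpt -rcons_cons mem_rcons in_cons wy orbT.
  by move: wy; rewrite (omin w wo wO) (negbTE ny).
have bo : boundary E O (cl u) o.
  by split => //; exists y; split => //; rewrite adj_sym.
have om : o != m by apply: contra_notN nb => /eqP <-.
have Vz z : z \in o :: pt o m -> Vor E o (cl u) z.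
  move=> hz; apply/seteqP; split => // w [/pathVP hw rw].
  have hw' : w \in o :: pt o m := pv_sub hz hw.
  have hpu := pt_cat3 oL hw'.
  have : o \in u :: pt u w by rewrite hpu -cat_cons mem_cat pv_last.
  by move/equivOP: rw => H /H; rewrite oO.
have := Hf o bo o m (Vz o (pv_head _ _)) oO (Vz m (pv_last _ _)) mO.
have anc : ancestor E o (cl u) o m.
  exists (pt o m); split; last exact: pv_head.
  by split; [exact: pt_path|exact: pt_last|exact: pt_uniq|exact: Vz].
move=> /(_ anc); rewrite leNgt; by rewrite it_lt.
Qed.

Lemma bd_s : boundary E O (cl s) m.
Proof.
have sm : s != m by apply: contraNneq sO => ->.
case: (pred_ex sm) => y [aym hpt ny].
split => //; exists y; split; last by rewrite adj_sym.
apply/equivOP => w wy; apply/negP => wO.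
have wm : w \in s :: pt s m by rewrite hpt -rcons_cons mem_rcons in_cons wy orbT.
by move: wy; rewrite (FactA wm wO) (negbTE ny).
Qed.

End Mm.

Lemma det_all : O != finset.set0 -> exists2 ostar, is_argmin E O s t ostar &
      [/\ forall r, is_class E O r -> (feasible E O s t r <-> boundary E O r ostar),
          exists r, is_class E O r /\ feasible E O s t r &
          star_arrangement E O (fun r => is_class E O r /\ feasible E O s t r)].
Proof.
move=> O0; case: (argmin_ex O0) => m mO mmin.
have iff r : is_class E O r -> (feasible E O s t r <-> boundary E O r m).
  case=> u [uO ->]; split; first exact: (@bd_of_feas m mO mmin u uO).
  exact: (@feas_of_bd m mO mmin u).
exists m; first exact: (@argminP m mO mmin).
split.
- exact: iff.
- exists (cl s); have cs : is_class E O (cl s) by exists s.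
  by split => //; apply/(iff _ cs); exact: (@bd_s m mO mmin).
- by exists m => r [cr fr]; exact/(iff r cr).
Qed.

End Main.
End Det.
End Tree.

Lemma mem_bigsetU_seq (U I : eqType) (s : seq I) (Q : pred I) (A : I -> set U) i x :
  i \in s -> Q i -> A i x -> (\big[setU/set0]_(j <- s | Q j) A j) x.
Proof.
elim: s => [|j s IH] //; rewrite inE big_cons => /orP [/eqP <-|hs] Qi Ax.
  by rewrite Qi; left.
by case: (Q j); [right|]; exact: IH.
Qed.


Section Bigmin.
Variable R : realType.
Lemma bigmin_pos (s : seq R) (f : R -> R) : (forall x, 0 < f x) ->
  0 < \big[Num.min/1]_(x <- s) f x.
Proof.
move=> h; elim: s => [|x s IH]; first by rewrite big_nil.
by rewrite big_cons lt_min h IH.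
Qed.
Lemma bigmin_le1 (s : seq R) (f : R -> R) : \big[Num.min/1]_(x <- s) f x <= 1.
Proof.
elim: s => [|x s IH]; first by rewrite big_nil.
by rewrite big_cons ge_min IH orbT.
Qed.
Lemma bigmin_le (s : seq R) (f : R -> R) x : x \in s -> \big[Num.min/1]_(y <- s) f y <= f x.
Proof.
elim: s => [|y s IH] //; rewrite big_cons inE => /orP [/eqP ->|/IH h].
  by rewrite ge_min lexx.
by rewrite ge_min h orbT.
Qed.
End Bigmin.


Section Prob.
Context d (T : measurableType d) (R : realType) (P : probability T R).

Lemma Pfin (A : set T) : measurable A -> P A \is a fin_num.
Proof.
move=> mA; rewrite ge0_fin_numE ?measure_ge0 //.
exact: (le_lt_trans (probability_le1 P mA) (ltry 1)).
Qed.

Lemma PE (A : set T) : measurable A -> P A = (fine (P A))%:E.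
Proof. by move=> mA; rewrite fineK // Pfin. Qed.

Lemma pge0 (A : set T) : 0 <= fine (P A).
Proof. by apply: fine_ge0; exact: measure_ge0. Qed.

Lemma ple1 (A : set T) : measurable A -> fine (P A) <= 1.
Proof. by move=> mA; rewrite -lee_fin -PE //; exact: probability_le1. Qed.

Lemma dec_small (F : nat -> set T) : (forall n, measurable (F n)) ->
  {homo F : n m / (n <= m)%N >-> (m <= n)%O} -> P (\bigcap_n F n) = 0%E ->
  forall eps : R, 0 < eps -> exists n, (P (F n) < eps%:E)%E.
Proof.
move=> mF hF h0 eps eps0.
have mI : measurable (\bigcap_n F n) by exact: bigcapT_measurable.
have : (P \o F) x @[x --> \oo] --> 0%E.
  rewrite -h0; exact: (@nonincreasing_cvg_mu _ T R P F (le_lt_trans (probability_le1 P (mF 0%N)) (ltry 1)) mF mI hF).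
case/fine_cvgP => _ /cvgr_lt /(_ eps eps0) [N _ HN].
exists N; rewrite PE //; rewrite lte_fin; exact: (HN N (leqnn N)).
Qed.


Lemma Ple (A B : set T) : measurable A -> measurable B -> A `<=` B -> (P A <= P B)%E.
Proof. by move=> mA mB AB; apply: le_measure => //; rewrite inE. Qed.

Lemma pt_small (X : {RV P >-> R}) : (forall x, P (X @^-1` [set x]) = 0%E) ->
  forall (x eps : R), 0 < eps -> exists2 eta : R, 0 < eta &
    (P (X @^-1` `[(x - eta)%R, (x + eta)%R]) < eps%:E)%E.
Proof.
move=> H0 x eps eps0.
pose F n := X @^-1` `[x - (n.+1%:R)^-1, x + (n.+1%:R)^-1].
have mF n : measurable (F n) by apply: measurable_funPTI; exact: measurable_itv.
have hF : {homo F : n m / (n <= m)%N >-> (m <= n)%O}.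
  move=> n m nm; rewrite subsetEset => y; rewrite /F /= !in_itv /=.
  have hle : (m.+1%:R)^-1 <= (n.+1%:R)^-1 :> R.
    by rewrite lef_pV2 ?posrE ?ltr0n // ler_nat ltnS.
  move=> /andP [h1 h2]; apply/andP; move: hle h1 h2.
  move: (m.+1%:R^-1) (n.+1%:R^-1) => a b *; split; lra.
have hI : \bigcap_n F n = X @^-1` [set x].
  apply/seteqP; split => [y Hy|y /= Hy n _]; last first.
    rewrite /F /= in_itv /= Hy.
    have : 0 < (n.+1%:R)^-1 :> R by rewrite invr_gt0 ltr0n.
    move: (n.+1%:R^-1) => a h; apply/andP; split; lra.
  apply/eqP/negPn/negP => hne.
  have hpos : 0 < `|X y - x| by rewrite normr_gt0 subr_eq0.
  set n := Num.Def.trunc (`|X y - x|^-1).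
  have := Hy n I; rewrite /F /= in_itv /= => /andP [h1 h2].
  have h3 : `|X y - x|^-1 < n.+1%:R := truncnS_gt _.
  have h4 : `|X y - x| <= (n.+1%:R)^-1.
    by rewrite ler_norml; move: h1 h2; move: (n.+1%:R^-1) => a *; apply/andP; split; lra.
  have h6 : n.+1%:R <= `|X y - x|^-1.
    by rewrite -(invrK (n.+1%:R)) lef_pV2 ?posrE ?invr_gt0 ?ltr0n.
  by move: (lt_le_trans h3 h6); rewrite ltxx.
have h0 : P (\bigcap_n F n) = 0%E by rewrite hI H0.
have [n Hn] := dec_small mF hF h0 eps0.
exists (n.+1%:R)^-1 => //; by rewrite invr_gt0 ltr0n.
Qed.

Lemma tight (X : {RV P >-> R}) eps : 0 < eps -> exists2 M : R, 0 < M &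
  (P (X @^-1` (~` `](- M)%R, M[)) < eps%:E)%E.
Proof.
move=> eps0.
pose F n := X @^-1` (~` `]-(n.+1%:R), n.+1%:R[ : set R).
have mF n : measurable (F n).
  by apply: measurable_funPTI; apply: measurableC; exact: measurable_itv.
have hF : {homo F : n m / (n <= m)%N >-> (m <= n)%O}.
  move=> n m nm; rewrite subsetEset => y; rewrite /F /= !in_itv /= => h1 h2; apply: h1.
  have hle : n.+1%:R <= m.+1%:R :> R by rewrite ler_nat ltnS.
  move/andP: h2 => [h2 h3]; apply/andP; split; lra.
have hI : \bigcap_n F n = set0.
  apply/seteqP; split => [y Hy|//].
  set n := Num.Def.trunc `|X y|.
  have h3 : `|X y| < n.+1%:R := truncnS_gt _.
  apply: (Hy n I); rewrite /= in_itv /=.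
  by rewrite -ltr_norml.
have h0 : P (\bigcap_n F n) = 0%E by rewrite hI measure0.
have [n Hn] := dec_small mF hF h0 eps0.
by exists n.+1%:R => //; rewrite ltr0n.
Qed.


Lemma unif (X : {RV P >-> R}) : (forall x, P (X @^-1` [set x]) = 0%E) ->
  forall eps : R, 0 < eps -> exists2 del : R, 0 < del &
    forall a : R, (P (X @^-1` `[(a - del)%R, (a + del)%R]) <= eps%:E)%E.
Proof.
move=> H0 eps eps0.
have [M M0 HM] := tight X eps0.
have /choice [eta Heta] : forall x : R, exists eta : R, 0 < eta /\
    (P (X @^-1` `[(x - eta)%R, (x + eta)%R]) < eps%:E)%E.
  by move=> x; have [e e0 He] := pt_small H0 x eps0; exists e.
have cpt := @segment_compact R (- M - 1)%R (M + 1)%R.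
have cc : cover_compact `[(- M - 1)%R, (M + 1)%R] by rewrite -compact_cover.
have [] := cc R setT (fun x : R => @ball _ R^o x (eta x / 2)).
- by move=> x _; exact: ball_open.
- move=> y Hy; exists y => //; apply: ballxx.
  by rewrite divr_gt0 // (Heta y).1.
move=> D' _ Hcov.
pose del := \big[Num.min/1]_(x <- finmap.enum_fset D') (eta x / 2).
have del0 : 0 < del.
  by apply: bigmin_pos => x; rewrite divr_gt0 // (Heta x).1.
have del1 : del <= 1 := bigmin_le1 _ _.
exists del => // a.
have mI : measurable (X @^-1` `[(a - del)%R, (a + del)%R]).
  by apply: measurable_funPTI; exact: measurable_itv.
have [Ha|Ha] := boolP (a \in `[(- M - 1)%R, (M + 1)%R]).
- have [x /= xD bx] := Hcov a Ha.
  have hdx : del <= eta x / 2 := bigmin_le _ xD.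
  move: bx; rewrite -ball_normE /ball_ /= => bx.
  apply: le_trans (ltW (Heta x).2).
  apply: Ple => //; first by apply: measurable_funPTI; exact: measurable_itv.
  move=> y; rewrite /= !in_itv /= => /andP [h1 h2].
  move: bx; rewrite ltr_norml => /andP [h3 h4].
  move: (eta x) hdx h3 h4 => e *.
  apply/andP; split; lra.
- apply: le_trans (ltW HM).
  apply: Ple => //.
    by apply: measurable_funPTI; apply: measurableC; exact: measurable_itv.
  move=> y; rewrite /= !in_itv /= => /andP [h1 h2] /andP [h3 h4].
  move: Ha; rewrite in_itv /= => /negP; apply; apply/andP; split; lra.
Qed.

Lemma union_bound (I : Type) (s : seq I) (Q : pred I) (A : I -> set T) :
  (forall i, measurable (A i)) ->
  (P (\big[setU/set0]_(i <- s | Q i) A i) <= \sum_(i <- s | Q i) P (A i))%E.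
Proof.
move=> mA; elim: s => [|i s IH]; first by rewrite !big_nil measure0.
rewrite !big_cons; case: (Q i) => //.
apply: le_trans (measureU2 _ _ _) _ => //.
  by apply: bigsetU_measurable => j _.
exact: leeD2l.
Qed.

Lemma cells_le1 (X : {RV P >-> R}) (a del : R) (N : nat) : 0 < del ->
  \sum_(j < N) fine (P (X @^-1` `[(a + j%:R * del)%R, (a + j.+1%:R * del)%R[)) <= 1.
Proof.
move=> del0.
have mC (b c : R) : measurable (X @^-1` `[b, c[).
  by apply: measurable_funPTI; exact: measurable_itv.
suff -> : \sum_(j < N) fine (P (X @^-1` `[(a + j%:R * del)%R, (a + j.+1%:R * del)%R[))
   = fine (P (X @^-1` `[a, (a + N%:R * del)%R[)) by exact: ple1.
elim: N => [|N IH].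
  rewrite big_ord0 mulr0n mul0r addr0.
  have -> : X @^-1` `[a, a[ = set0.
    by apply/seteqP; split => // y; rewrite /= in_itv /= => /andP [h1 h2]; lra.
  by rewrite measure0.
rewrite big_ord_recr /= IH.
rewrite -fineD ?Pfin //; congr fine.
rewrite -measureU //; last first.
  apply/seteqP; split => // y [] /=; rewrite !in_itv /= => /andP [h1 h2] /andP [h3 h4]; lra.
congr (P _); apply/seteqP; split => y /=; rewrite !in_itv /=.
  have : 0 <= N%:R * del by apply: mulr_ge0 => //; exact: ltW.
  have : N%:R * del <= N.+1%:R * del by rewrite ler_pM2r // ler_nat.
  move: (N%:R * del) (N.+1%:R * del) => u v h5 h6.
  by case=> /andP [h1 h2]; apply/andP; split; lra.
have : N%:R * del <= N.+1%:R * del by rewrite ler_pM2r // ler_nat.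
have : 0 <= N%:R * del by apply: mulr_ge0 => //; exact: ltW.
move: (N%:R * del) (N.+1%:R * del) => u v h1 h2 /andP [h3 h4].
have [h5|h5] := ltP (X y) (a + u); [left|right]; apply/andP; split; lra.
Qed.

Section Core.
Variable I : finType.
Variable F : {set I}.
Variable X : I -> {RV P >-> R}.
Hypothesis indep : mutually_independent F X.
Variable e : I.
Hypothesis eF : e \in F.
Hypothesis atom : forall x, P (X e @^-1` [set x]) = 0%E.
Variable c : I -> R.

Local Notation G := (F :\ e).
Definition Zf (w : T) : R := X e w + \sum_(f in G) c f * X f w.

Lemma mZ : measurable_fun setT Zf.
Proof.
apply: measurable_realfun.measurable_funD; first exact: measurable_funPT.
have -> : (fun w => \sum_(f in G) c f * X f w) = (fun w => \sum_(f <- index_enum I)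
   (if f \in G then c f * X f w else 0)).
  by apply/funext => w; rewrite big_mkcond.
apply: measurable_sum => f; case: (f \in G); last exact: measurable_cst.
apply: measurable_realfun.measurable_funM; [exact: measurable_cst|exact: measurable_funPT].
Qed.

Lemma core_le (eps : R) : 0 < eps -> (P (Zf @^-1` [set 0%R]) <= (eps + eps)%:E)%E.
Proof.
move=> eps0.
have [d0 d00 Hd0] := unif atom eps0.
set Cs := \sum_(f in G) `|c f|.
have Cs0 : 0 <= Cs by apply: sumr_ge0 => f _; exact: normr_ge0.
pose del := d0 / (Cs + 1).
have del0 : 0 < del by apply: divr_gt0 => //; lra.
have hCs : Cs * del <= d0.
  have h : del * (Cs + 1) = d0 by rewrite /del divfK // gt_eqF //; lra.
  nra.
pose n := #|G|.
have n0 : 0 <= n%:R :> R := ler0n R n.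
pose q := eps / (n%:R + 1).
have q0 : 0 < q by apply: divr_gt0 => //; lra.
have [M M0 HM] : exists2 M : R, 0 < M & forall f, f \in G ->
    (P (X f @^-1` (~` `](- M)%R, M[)) <= q%:E)%E.
  have /choice [Mf HMf] : forall f : I, exists M : R, 0 < M /\
      (P (X f @^-1` (~` `](- M)%R, M[)) < q%:E)%E.
    by move=> f; have [M' M0' H'] := tight (X f) q0; exists M'.
  have S0 : 0 <= \sum_(f in G) Mf f by apply: sumr_ge0 => f _; exact: ltW (HMf f).1.
  exists (\sum_(f in G) Mf f + 1); first lra.
  move=> f fG; apply: le_trans (ltW (HMf f).2).
  apply: Ple.
  - by apply: measurable_funPTI; apply: measurableC; exact: measurable_itv.
  - by apply: measurable_funPTI; apply: measurableC; exact: measurable_itv.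
  have hle : Mf f <= \sum_(g in G) Mf g.
    rewrite (bigD1 f) //=.
    have : 0 <= \sum_(g in G | g != f) Mf g.
      by apply: sumr_ge0 => g _; exact: ltW (HMf g).1.
    lra.
  move=> y /=; rewrite !in_itv /= => h1 h2; apply: h1.
  by move/andP: h2 => [h2 h3]; apply/andP; split; lra.
pose K := (Num.Def.trunc (M / del)).+1.
have hK : M < K%:R * del by rewrite -ltr_pdivrMr // truncnS_gt.
pose NN := (K + K)%N.
pose a := - (K%:R * del).
have hNN : NN.+1%:R * del = K%:R * del + K%:R * del + del.
  by rewrite /NN -addn1 !natrD !mulrDl mul1r.
have hS (j : nat) : j.+1%:R * del = j%:R * del + del.
  by rewrite -addn1 natrD mulrDl mul1r.
pose idx (x : R) : 'I_NN.+1 := inord (Num.Def.trunc ((x - a) / del)).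
have Hidx x : - M < x < M -> a + (idx x)%:R * del <= x < a + (idx x).+1%:R * del.
  move=> /andP [h1 h2].
  have hpos : 0 <= (x - a) / del.
    by apply: divr_ge0; [rewrite /a; lra | exact: ltW].
  have hlt : (Num.Def.trunc ((x - a) / del) < NN.+1)%N.
    rewrite ltnS truncn_le_nat ltr_pdivrMr // hNN /a; lra.
  rewrite /idx inordK //.
  have h3 := truncn_le ((x - a) / del); rewrite hpos in h3.
  have h4 := truncnS_gt ((x - a) / del).
  move: h3 h4; set m := Num.Def.trunc _ => h3 h4.
  rewrite ler_pdivlMr // in h3; rewrite ltr_pdivrMr // in h4.
  by apply/andP; split; lra.
pose j0 : 'I_NN.+1 := ord0.
pose Q := fun (i : I) (j : 'I_NN.+1) => (i \in G) || (j == j0).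
pose ak (k : {ffun I -> 'I_NN.+1}) := - \sum_(f in G) c f * (a + (k f)%:R * del).
pose cell (j : nat) : set R := [set` `[(a + j%:R * del)%R, (a + j.+1%:R * del)%R[].
pose B k i : set R := if i == e then [set` `[(ak k - d0)%R, (ak k + d0)%R]] else cell (k i).
pose A k := \bigcap_(i in [set i | i \in F]) X i @^-1` B k i.
have mB k i : measurable (B k i) by rewrite /B; case: (i == e); exact: measurable_itv.
have mA k : measurable (A k).
  apply: fin_bigcap_measurable; first exact: finite_finset.
  by move=> i _; exact: measurable_funPTI.
pose NB := \big[setU/set0]_(f in G) X f @^-1` (~` `](- M)%R, M[).
have mNB : measurable NB.
  apply: bigsetU_measurable => f _; apply: measurable_funPTI.
  by apply: measurableC; exact: measurable_itv.
pose UA := \big[setU/set0]_(k in family Q) A k.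
have mUA : measurable UA by apply: bigsetU_measurable => k _.
have cov : Zf @^-1` [set 0%R] `<=` NB `|` UA.
  move=> w /= Zw; rewrite /Zf in Zw.
  have [hb|hb] := pselect (forall f, f \in G -> - M < X f w < M).
  - right; pose k := [ffun i => if i \in G then idx (X i w) else j0].
    apply: (@mem_bigsetU_seq _ _ _ _ _ k); first exact: mem_index_enum.
      apply/familyP => i; rewrite /Q ffunE.
      have inQ : forall (b : bool) (j : 'I_NN.+1), (j \in (fun j => b || (j == j0))) = b || (j == j0) by [].
      by rewrite inQ; case: (i \in G) => //=; rewrite eqxx.
    move=> i /= iF; rewrite /B.
    case: eqP => [ie|/eqP ie].
    + subst i.
      have hd : `|X e w - ak k| <= Cs * del.
        have -> : X e w - ak k = \sum_(f in G) c f * ((a + (k f)%:R * del) - X f w).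
          rewrite /ak opprK.
          have -> : X e w = - \sum_(f in G) c f * X f w by lra.
          rewrite addrC -sumrB; apply: eq_bigr => f _; by rewrite mulrBr.
        apply: le_trans (ler_norm_sum _ _ _) _.
        rewrite /Cs mulr_suml; apply: ler_sum => f fG.
        rewrite normrM ler_wpM2l //.
        rewrite ffunE fG; have := Hidx _ (hb f fG); rewrite hS.
        move: ((idx (X f w))%:R * del) => u /andP [h1 h2].
        by rewrite ler_norml; apply/andP; split; lra.
      rewrite /= in_itv /=; move: hd; rewrite ler_norml => /andP [h1 h2].
      by apply/andP; split; lra.
    + have iG : i \in G by rewrite in_setD1 ie iF.
      rewrite /cell /= ffunE iG; exact: Hidx (hb i iG).
  - left; have [f fG hf] : exists2 f, f \in G & ~ (- M < X f w < M).
      apply: contrapT => hn; apply: hb => f fG; apply: contrapT => hf; apply: hn.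
      by exists f.
    apply: (@mem_bigsetU_seq _ _ _ _ _ f); [exact: mem_index_enum|exact: fG|].
    by rewrite /= in_itv /=.
have PNB : (P NB <= eps%:E)%E.
  apply: le_trans (union_bound _ _ _) _ => [f|].
    by apply: measurable_funPTI; apply: measurableC; exact: measurable_itv.
  apply: (@le_trans _ _ (\sum_(f in G) q%:E)%E).
    by apply: lee_sum => f fG; exact: HM.
  rewrite sumEFin lee_fin sumr_const -/n.
  have h : q * (n%:R + 1) = eps by rewrite /q divfK // gt_eqF //; lra.
  rewrite -mulr_natr; nra.
have PUA : (P UA <= eps%:E)%E.
  apply: le_trans (union_bound _ _ _) _ => [k|]; first exact: mA.
  pose p i (j : nat) := fine (P (X i @^-1` cell j)).
  have PA k : (P (A k) <= (eps * \prod_(i in G) p i (k i))%:E)%E.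
    rewrite /A (indep (subxx F) (mB k)).
    rewrite (bigD1 e) //=.
    have -> : (\prod_(i in F | i != e) P (X i @^-1` B k i))%E =
        (\prod_(i in G) p i (k i))%:E.
      rewrite -prodEFin.
      rewrite [RHS](eq_bigl (fun i => (i \in F) && (i != e))); last first.
        by move=> i; rewrite in_setD1 andbC.
      apply: eq_bigr => i /andP [_ ie]; rewrite /B (negbTE ie) /p PE //.
      by apply: measurable_funPTI; exact: measurable_itv.
    rewrite PE; last exact: measurable_funPTI (mB k e).
    rewrite -EFinM lee_fin ler_wpM2r //.
      by apply: prodr_ge0 => i _; exact: pge0.
    rewrite -lee_fin -PE; last exact: measurable_funPTI (mB k e).
    rewrite /B eqxx; exact: Hd0.
  apply: (@le_trans _ _ (\sum_(k in family Q) (eps * \prod_(i in G) p i (k i))%:E)%E).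
    by apply: lee_sum => k _; exact: PA.
  rewrite sumEFin lee_fin -mulr_sumr ler_piMr //; first exact: ltW.
  have -> : \sum_(k in family Q) \prod_(i in G) p i (k i) =
      \prod_(i : I) \sum_(j | Q i j) (if i \in G then p i j else 1).
    rewrite bigA_distr_big_dep; apply: eq_bigr => k _; rewrite big_mkcond /=.
    by apply: eq_bigr => i _; case: (i \in G).
  apply: prodr_ile1 => i _; apply/andP; split.
    by apply: sumr_ge0 => j _; case: (i \in G) => //; exact: pge0.
  rewrite /Q; case: (boolP (i \in G)) => iG /=.
    exact: cells_le1.
  by rewrite big_pred1_eq.
have mZ0 : measurable (Zf @^-1` [set 0%R]).
  by have := mZ measurableT (measurable_set1 (0:R)); rewrite setTI.
apply: le_trans (Ple mZ0 _ cov) _; first exact: measurableU.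
apply: le_trans (measureU2 _ _ _) _ => //.
by rewrite EFinD; apply: leeD.
Qed.


Lemma mZ0 : measurable (Zf @^-1` [set 0%R]).
Proof. by have := mZ measurableT (measurable_set1 (0:R)); rewrite setTI. Qed.

Lemma core_null : P (Zf @^-1` [set 0%R]) = 0%E.
Proof.
rewrite PE; last exact: mZ0.
set z := fine _.
have z0 : 0 <= z := pge0 _.
suff : z <= 0 by move=> h; have -> : z = 0 by apply/eqP; rewrite eq_le h z0.
rewrite leNgt; apply/negP => zpos.
have e4 : 0 < z / 4 by apply: divr_gt0.
have := core_le e4; rewrite PE; last exact: mZ0.
rewrite lee_fin => h; have h' : z <= z / 4 + z / 4 := h; lra.
Qed.

End Core.
End Prob.

Lemma tie_negl (V : finType) (E : {set {set V}}) (HT : is_tree E) (s : V)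
  d (T : measurableType d) (R : realType) (P : probability T R)
  (tau : {set V} -> {RV P >-> R}) :
  (forall e, e \in E -> forall x : R, P (tau e @^-1` [set x]) = 0%E) ->
  mutually_independent E tau ->
  forall a b, a != b -> P.-negligible [set w | inf_time E s (fun e => tau e w) a =
                                              inf_time E s (fun e => tau e w) b].
Proof.
move=> hat ind.
suff H : forall a b, b \notin s :: pt HT s a -> P.-negligible
    [set w | inf_time E s (fun e => tau e w) a = inf_time E s (fun e => tau e w) b].
  move=> a b ab; case: (sep_pair HT s ab) => h; first exact: H.
  by apply: negligibleS (H _ _ h) => w /= ->.
move=> a b hb; have [e [eE eb ea]] := sep_edge hb.
pose c f : R := (f \in edg s (pt HT s b))%:R - (f \in edg s (pt HT s a))%:R.
exists (Zf E tau e c @^-1` [set 0%R]); split; first exact: mZ0.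
  exact: (core_null ind eE (hat e eE)).
move=> w /= hw; rewrite !(itE' HT) in hw.
have : \sum_(f in E) c f * tau f w = 0.
  rewrite /c; under eq_bigr do rewrite mulrBl.
  by rewrite sumrB hw subrr.
rewrite (bigD1 e) //= /c eb (negbTE ea) subr0 mul1r => h.
rewrite /Zf -[RHS]h; congr (_ + _); apply: eq_bigl => f.
by rewrite in_setD1 andbC.
Qed.

Theorem theorem1 (V : finType) (E : {set {set V}}) (O : {set V}) (s : V)
  (d : measure_display) (T : measurableType d) (R : realType)
  (P : probability T R) (tau : {set V} -> {RV P >-> R}) :
  is_tree E ->
  O != finset.set0 -> O != [set: V]%SET ->
  s \notin O ->
  (forall e, e \in E -> forall w, 0 <= tau e w) ->
  (forall e, e \in E -> forall x : R, P (tau e @^-1` [set x]) = 0%E) ->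
  mutually_independent E tau ->
  {ae P, forall w : T,
    let t := fun e => tau e w in
    exists2 ostar, is_argmin E O s t ostar &
      [/\ forall r, is_class E O r ->
            (feasible E O s t r <-> boundary E O r ostar),
          exists r, is_class E O r /\ feasible E O s t r &
          star_arrangement E O (fun r => is_class E O r /\ feasible E O s t r)]}.
Proof.
move=> HT O0 _ sO tpos tatom indep.
pose tie (pr : V * V) := [set w | inf_time E s (fun e => tau e w) pr.1 =
                                  inf_time E s (fun e => tau e w) pr.2].
pose Bad := \big[setU/set0]_(pr : V * V | (pr.1 \in O) && (pr.2 \in O) && (pr.1 != pr.2)) tie pr.
have HB : P.-negligible Bad.
  rewrite /Bad; elim: (index_enum _) => [|pr l IH].
    by rewrite big_nil; exact: negligible_set0.
  rewrite big_cons; case: ifP => // /andP [/andP [h1 h2] h3].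
  by apply: negligibleU IH; exact: tie_negl.
apply: (negligibleS _ HB) => w /= Hw.
apply: contrapT => Hn; apply: Hw.
apply: (det_all HT sO) => //.
  by move=> e eE; exact: tpos.
move=> o1 o2 h1 h2 heq; apply/eqP/negPn/negP => hne; apply: Hn.
apply: (@mem_bigsetU_seq _ _ _ _ _ (o1, o2)); first exact: mem_index_enum.
  by rewrite /= h1 h2 hne.
exact: heq.
Qed.
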